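(* Let $d\ge 2$, let $H$ be a $d$-regular graph on vertex set $[h]$, and let $G$ be any $n$-lift of $H$. Then \[\lambda^*(G)\le 96\sup_{x\in Z}|\langle x,x\rangle_{N,E^*}|+480\sqrt{d}.\]
   Context: An $n$-lift $G$ of $H$ has vertex set $\{(i,j): i\in[h], j\in[n]\}$ with fibres $V_i=\{(i,j):j\in[n]\}$; for each edge $ii'$ of $H$ there is a perfect matching between $V_i$ and $V_{i'}$, and these are the only edges. $M$ is the adjacency matrix of $G$; $\overline{M}_{(i,j),(i',j')}=1/n$ if $ii'\in E(H)$ and $0$ otherwise; $N=M-\overline{M}$. The new eigenvalues of $G$ are the eigenvalues of $M$ on the subspace of vectors with $\sum_{v\in V_i}x_v=0$ for all $i$; $\lambda^*(G)$ is the largest absolute value of a new eigenvalue. For a matrix $A$, vectors $x,y$ and $E\subseteq\mathbb{R}^2$, $\langle x,y\rangle_{A,E}=\sum_{u,v:(x_u,y_v)\in E}x_uA_{uv}y_v$. Let $D^{+}=\{0\}\cup\{2^k/\sqrt{nh}:k\in\mathbb{Z},k\ge 0\}$, $E^*=\{(x_1,x_2)\in\mathbb{R}^2:x_1,x_2>0,\ x_1/x_2\in(d^{-1/2},d^{1/2})\}$, and \[Z=\Big\{x\in\mathbb{R}^{V(G)}:\|x\|_2^2\le 10,\ x_v\in D^+\ \forall v,\ \sup_v x_v\le d\cdot\inf_{v:x_v\ne0}x_v\Big\}.\] *)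

(* Defs.v *)
From HB Require Import structures.
From mathcomp Require Import all_boot all_order all_algebra.
Set Implicit Arguments. Unset Strict Implicit. Unset Printing Implicit Defensive.
Import Order.TTheory GRing.Theory Num.Theory.
Local Open Scope ring_scope.

Definition simple_graph (h : nat) (H : rel 'I_h) : Prop :=
  (forall i, ~~ H i i) /\ (forall i i', H i i' = H i' i).

Definition regular (h d : nat) (H : rel 'I_h) : Prop :=
  forall i, #|[set i' | H i i']| = d.

(* Vertex set of an n-lift: pairs (i,j), i in [h], j in [n]; fibre V_i = {(i,j)}. *)
Definition lvert (h n : nat) := ('I_h * 'I_n)%type.

(* G (given by its adjacency relation e) is an n-lift of H: e is symmetric,
   every edge of G lies over an edge of H, and for every edge ii' of H the
   edges of G between V_i and V_i' form a perfect matching. *)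
Definition is_lift (h n : nat) (H : rel 'I_h) (e : rel (lvert h n)) : Prop :=
  (forall u v, e u v = e v u) /\
  (forall u v, e u v -> H u.1 v.1) /\
  (forall (i i' : 'I_h) (j : 'I_n), H i i' ->
     exists! j' : 'I_n, e (i, j) (i', j')).

Section Mats.
Variable R : rcfType.
Variables (h n : nat) (H : rel 'I_h) (e : rel (lvert h n)).

Definition adjM (u v : lvert h n) : R := if e u v then 1 else 0.
Definition adjMbar (u v : lvert h n) : R := if H u.1 v.1 then n%:R^-1 else 0.
Definition matN (u v : lvert h n) : R := adjM u v - adjMbar u v.

(* x is orthogonal to the fibre-constant vectors *)
Definition fibre_sum_zero (x : lvert h n -> R) : Prop :=
  forall i : 'I_h, \sum_(j : 'I_n) x (i, j) = 0.

Definition new_eigenvalue (lambda : R) : Prop :=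
  exists x : lvert h n -> R,
    (exists v, x v != 0) /\ fibre_sum_zero x /\
    (forall u, \sum_(v : lvert h n) adjM u v * x v = lambda * x u).

Definition restr_form (A : lvert h n -> lvert h n -> R) (E : R -> R -> bool)
    (x y : lvert h n -> R) : R :=
  \sum_(u : lvert h n) \sum_(v : lvert h n)
     (if E (x u) (y v) then x u * A u v * y v else 0).
End Mats.

Definition Estar (R : rcfType) (d : nat) (x1 x2 : R) : bool :=
  [&& 0 < x1, 0 < x2, (Num.sqrt (d%:R : R))^-1 < x1 / x2
     & x1 / x2 < Num.sqrt (d%:R : R)].

Definition Dplus (R : rcfType) (n h : nat) (t : R) : Prop :=
  t = 0 \/ exists k : nat, t = 2%:R ^+ k / Num.sqrt ((n * h)%:R).

(* the set Z; "sup_v x_v <= d * inf_{v : x_v <> 0} x_v" written pointwise *)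
Definition inZ (R : rcfType) (h n d : nat) (x : lvert h n -> R) : Prop :=
  \sum_(v : lvert h n) x v ^+ 2 <= 10%:R /\
  (forall v, Dplus n h (x v)) /\
  (forall u v, x v != 0 -> x u <= d%:R * x v).

(* Main.v *)
Require Import Defs.
From Stdlib Require Import FunctionalExtensionality Lia.
From HB Require Import structures.
From mathcomp Require Import all_boot all_order all_algebra.
Set Implicit Arguments. Unset Strict Implicit. Unset Printing Implicit Defensive.
Import Order.TTheory GRing.Theory Num.Theory.
Local Open Scope ring_scope.

Section Derand.
Variable R : rcfType.
Variable V : finType.

Definition qf (A : V -> V -> R) (x : V -> R) := \sum_u \sum_v x u * A u v * x v.
Definition upd (y : V -> R) (u0 : V) (t : R) := fun u => if u == u0 then t else y u.

Lemma qf_upd (A : V -> V -> R) (hA : forall u, A u u = 0) y u0 :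
  exists al be : R, forall t, qf A (upd y u0 t) = be + t * al.
Proof.
exists ((\sum_(v | v != u0) A u0 v * y v) + \sum_(u | u != u0) y u * A u u0).
exists (\sum_(u | u != u0) \sum_(v | v != u0) y u * A u v * y v).
move=> t; rewrite /qf (bigD1 u0) //= (bigD1 u0) //= /upd eqxx hA mulr0 mul0r add0r.
have E1 : \sum_(v | v != u0) t * A u0 v * (if v == u0 then t else y v)
   = t * \sum_(v | v != u0) A u0 v * y v.
  rewrite mulr_sumr; apply: eq_bigr => v /negbTE ->; by rewrite mulrA.
rewrite E1.
have E2 : \sum_(u | u != u0) \sum_v (if u == u0 then t else y u) * A u v *
    (if v == u0 then t else y v)
  = t * (\sum_(u | u != u0) y u * A u u0) +
    \sum_(u | u != u0) \sum_(v | v != u0) y u * A u v * y v.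
  rewrite mulr_sumr -big_split /=; apply: eq_bigr => u /negbTE ->.
  rewrite (bigD1 u0) //= eqxx; congr (_ + _).
    by rewrite mulrC.
  by apply: eq_bigr => v /negbTE ->.
by rewrite E2 addrA addrC mulrDr.
Qed.

Lemma derand_step (A : V -> V -> R) (hA : forall u, A u u = 0) y u0 a b :
  a <= y u0 <= b -> exists t, (t = a \/ t = b) /\ qf A y <= qf A (upd y u0 t).
Proof.
move=> /andP[ha hb]; have [al [be E]] := qf_upd hA y u0.
have -> : qf A y = qf A (upd y u0 (y u0)).
  by congr qf; apply: functional_extensionality => u; rewrite /upd; case: eqP => // ->.
rewrite E; case: (lerP 0 al) => hal.
  exists b; split; first by right.
  by rewrite E lerD2l ler_wpM2r.
exists a; split; first by left.
by rewrite E lerD2l ler_wnM2r // ltW.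
Qed.

Lemma derand (A : V -> V -> R) (hA : forall u, A u u = 0) (x a b : V -> R) :
  (forall u, a u <= x u <= b u) ->
  exists y, (forall u, y u = a u \/ y u = b u) /\ qf A x <= qf A y.
Proof.
move=> hab.
suff : forall s : seq V, exists y, (forall u, (u \in s -> y u = a u \/ y u = b u)
     /\ (u \notin s -> y u = x u)) /\ qf A x <= qf A y.
  move=> /(_ (enum V)) [y [hy hq]]; exists y; split => // u.
  by apply: (proj1 (hy u)); rewrite mem_enum.
elim=> [|u0 s [y [hy hq]]].
  by exists x; split.
case hu0 : (u0 \in s).
  exists y; split => // u; rewrite in_cons; split.
    case/orP => [/eqP ->|]; [exact: (proj1 (hy u0)) | exact: (proj1 (hy u))].
  by rewrite negb_or => /andP[_]; apply: (proj2 (hy u)).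
have yu0 : y u0 = x u0 by apply: (proj2 (hy u0)); rewrite hu0.
have hy0 : a u0 <= y u0 <= b u0 by rewrite yu0.
have [t [ht hq']] := derand_step hA hy0.
exists (upd y u0 t); split; last exact: le_trans hq'.
move=> u; rewrite /upd in_cons; case: eqP => [->|_] /=.
  split => // _; case: ht => ->; by [left|right].
exact: hy.
Qed.
End Derand.
Lemma dlog (R : rcfType) (b : R) : 2%:R <= b -> forall (N : nat) (t : R),
  1 <= t -> t <= N%:R -> exists k, b ^+ k <= t < b ^+ k.+1.
Proof.
move=> hb; have b0 : 0 < b by apply: lt_le_trans hb.
elim=> [|N IH] t t1 tN.
  by have := le_trans t1 tN; rewrite ler10.
case: (ltrP t b) => htb.
  by exists 0%N; rewrite expr0 expr1 t1 htb.
have hN : (1 <= N)%N.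
  case: N {IH} tN => // tN; exfalso.
  have := le_trans (le_trans hb htb) tN; by rewrite ler_nat.
have [k /andP[k1 k2]] : exists k, b ^+ k <= t / b < b ^+ k.+1.
  apply: IH; first by rewrite ler_pdivlMr // mul1r.
  rewrite ler_pdivrMr //; apply: (le_trans tN).
  apply: (@le_trans _ _ (N%:R * 2%:R)); last by rewrite ler_wpM2l.
  by rewrite -natrM ler_nat muln2 -addnn -addn1 leq_add2l.
exists k.+1; rewrite exprS mulrC -ler_pdivlMr // k1 /=.
by rewrite exprS mulrC -ltr_pdivrMr.
Qed.
Section Graph.
Variable R : rcfType.
Variables (h n d : nat) (H : rel 'I_h) (e : rel (lvert h n)).
Hypothesis hd : (2 <= d)%N.
Hypothesis hS : simple_graph H.
Hypothesis hreg : regular d H.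
Hypothesis hL : is_lift H e.
Hypothesis hn : (0 < n)%N.

Local Notation V := (lvert h n).
Local Notation N := (@matN R h n H e).
Local Notation M := (@adjM R h n e).
Local Notation Mb := (@adjMbar R h n H).

Lemma sum_pair (F : V -> R) : \sum_v F v = \sum_i \sum_j F (i, j).
Proof. by rewrite pair_big; apply: eq_bigr; case. Qed.

Lemma sum_ind (T : finType) (P : pred T) :
  \sum_(i : T) (if P i then 1 else 0 : R) = #|P|%:R.
Proof. by rewrite -big_mkcond /= sumr_const. Qed.

Lemma N_diag u : N u u = 0.
Proof.
rewrite /matN /adjM /adjMbar; case: hS => irr _.
have -> : H u.1 u.1 = false by apply: negbTE.
case E : (e u u); last by rewrite subr0.
by have := (proj1 (proj2 hL)) u u E; rewrite (negbTE (irr _)).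
Qed.

Lemma M_sym u v : M u v = M v u.
Proof. by rewrite /adjM (proj1 hL). Qed.

Lemma Mb_sym u v : Mb u v = Mb v u.
Proof. by rewrite /adjMbar (proj2 hS). Qed.

Lemma card_nb i : #|[pred i' | H i i']| = d.
Proof. by rewrite -(hreg i) cardsE. Qed.

Lemma M_row u : \sum_v M u v = d%:R.
Proof.
case: u => i0 j0; rewrite sum_pair -(card_nb i0) -sum_ind.
apply: eq_bigr => i _ /=; case Hi : (H i0 i).
  have [j1 [ej1 uj1]] := (proj2 (proj2 hL)) i0 i j0 Hi.
  rewrite (bigD1 j1) //= /adjM ej1 big1 ?addr0 // => j /negbTE nj.
  case E : (e (i0, j0) (i, j)) => //.
  by have := uj1 j E => /eqP; rewrite eq_sym nj.
apply: big1 => j _; rewrite /adjM.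
case E : (e (i0, j0) (i, j)) => //.
by have := (proj1 (proj2 hL)) _ _ E; rewrite /= Hi.
Qed.

Lemma Mb_row u : \sum_v Mb u v = d%:R.
Proof.
case: u => i0 j0; rewrite sum_pair -(card_nb i0) -sum_ind.
apply: eq_bigr => i _ /=; rewrite /adjMbar /=; case Hi : (H i0 i).
  by rewrite sumr_const card_ord -[_ *+ n]mulr_natr mulVf // pnatr_eq0 -lt0n.
by rewrite big1_eq.
Qed.

Lemma Mb_x (x : V -> R) u : fibre_sum_zero x -> \sum_v Mb u v * x v = 0.
Proof.
move=> hx; rewrite sum_pair big1 // => i _; rewrite /adjMbar /=.
case: (H u.1 i); last by rewrite big1 // => j _; rewrite mul0r.
by rewrite -mulr_sumr hx mulr0.
Qed.

Definition nrm (x : V -> R) := \sum_u x u ^+ 2.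

Lemma eig_qf lambda (x : V -> R) : fibre_sum_zero x ->
  (forall u, \sum_(v : V) M u v * x v = lambda * x u) ->
  qf N x = lambda * nrm x.
Proof.
move=> hx hM; rewrite /qf /nrm mulr_sumr; apply: eq_bigr => u _.
have -> : \sum_v x u * N u v * x v = x u * \sum_v N u v * x v.
  by rewrite mulr_sumr; apply: eq_bigr => v _; rewrite mulrA.
have -> : \sum_v N u v * x v = \sum_v M u v * x v - \sum_v Mb u v * x v.
  by rewrite -sumrB; apply: eq_bigr => v _; rewrite /matN mulrBl.
by rewrite hM Mb_x // subr0 mulrCA expr2 mulrA.
Qed.

End Graph.
Section Est.
Variable R : rcfType.
Variable d : nat.
Hypothesis hd : (2 <= d)%N.
Local Notation th := (Num.sqrt (d%:R : R)).

Lemma th_gt0 : 0 < th.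
Proof. by rewrite sqrtr_gt0 ltr0n; case: (d) hd. Qed.

Lemma th_sq : th ^+ 2 = d%:R.
Proof. by rewrite sqr_sqrtr // ler0n. Qed.

Lemma th_ge1 : 1 <= th.
Proof.
by rewrite -[X in X <= _]sqrtr1 ler_sqrt ?ler1n ?ltr01 //; case: (d) hd.
Qed.

Lemma th_le_d : th <= d%:R.
Proof. by rewrite -[X in _ <= X]th_sq -[X in X <= _]mulr1 expr2 ler_wpM2l ?th_ge1 // ltW // th_gt0. Qed.

Lemma Estar_pos (a b : R) : Estar d a b -> 0 < a /\ 0 < b.
Proof. by case/and4P. Qed.

Lemma Estar0l (b : R) : Estar d 0 b = false.
Proof. by rewrite /Estar ltxx. Qed.

Lemma Estar0r (b : R) : Estar d b 0 = false.
Proof. by rewrite /Estar ltxx /= andbF. Qed.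

Lemma Estar_ratio (a b : R) : Estar d a b -> a < th * b /\ b < th * a.
Proof.
case/and4P => ha hb h1 h2; split.
  by rewrite -ltr_pdivrMr.
move: h1; rewrite ltr_pdivlMr // => h1.
by move: h1; rewrite -(ltr_pM2l th_gt0) mulrA mulfV ?gt_eqF ?th_gt0 // mul1r.
Qed.

Lemma Estar_scale (k a b : R) : 0 < k -> Estar d (k * a) (k * b) = Estar d a b.
Proof.
move=> hk; rewrite /Estar !pmulr_rgt0 //.
by rewrite -[k * a / (k * b)]mulf_div divff ?mul1r // gt_eqF.
Qed.

Lemma notEstar (a b : R) : 0 <= a -> 0 <= b -> ~~ Estar d a b ->
  th * (a * b) <= a ^+ 2 + b ^+ 2.
Proof.
rewrite le0r => /orP[/eqP->|ha]; first by rewrite !mul0r mulr0 expr0n /= add0r sqr_ge0.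
rewrite le0r => /orP[/eqP->|hb]; first by rewrite !mulr0 expr0n /= addr0 sqr_ge0.
rewrite /Estar ha hb /= negb_and -!leNgt => /orP[h1|h2].
  have h : th * a <= b.
    move: h1; rewrite ler_pdivrMr // => h1'.
    by rewrite mulrC -ler_pdivlMr ?th_gt0 // mulrC.
  apply: (@le_trans _ _ (b ^+ 2)); last by rewrite lerDr sqr_ge0.
  by rewrite mulrA expr2 ler_wpM2r // ltW.
have h : th * b <= a.
  by move: h2; rewrite ler_pdivlMr // mulrC.
apply: (@le_trans _ _ (a ^+ 2)); last by rewrite lerDl sqr_ge0.
by rewrite mulrCA expr2 ler_wpM2l // ltW.
Qed.
End Est.
Section Main.
Variable R : rcfType.
Variables (h n d : nat) (H : rel 'I_h) (e : rel (lvert h n)).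
Hypothesis hd : (2 <= d)%N.
Hypothesis hS : simple_graph H.
Hypothesis hreg : regular d H.
Hypothesis hL : is_lift H e.
Hypothesis hn : (0 < n)%N.
Hypothesis hh : (0 < h)%N.
Variable B : R.

Local Notation V := (lvert h n).
Local Notation N := (@matN R h n H e).
Local Notation th := (Num.sqrt (d%:R : R)).
Local Notation sq := (Num.sqrt ((n * h)%:R : R)).
Local Notation G w := (@restr_form R h n N (@Estar R d) w w).
Local Notation DP := (@Dplus R n h).

Hypothesis hB : forall x : V -> R, @inZ R h n d x -> `|G x| <= B.

Lemma th0 : 0 < th. Proof. exact: th_gt0. Qed.
Lemma th1 : 1 <= th. Proof. exact: th_ge1. Qed.
Lemma thsq : th ^+ 2 = d%:R. Proof. exact: th_sq. Qed.
Lemma thd : th <= d%:R. Proof. exact: th_le_d. Qed.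

Lemma sq_gt0 : 0 < sq.
Proof. by rewrite sqrtr_gt0 ltr0n muln_gt0 hn hh. Qed.

Lemma sq_sq : sq ^+ 2 = (n * h)%:R.
Proof. by rewrite sqr_sqrtr // ler0n. Qed.

Lemma DP_ge0 t : DP t -> 0 <= t.
Proof.
case=> [->//|[k ->]]; apply: divr_ge0; last exact: ltW sq_gt0.
by rewrite exprn_ge0 // ler0n.
Qed.

Lemma DP_ge t : DP t -> t != 0 -> sq^-1 <= t.
Proof.
case=> [->|[k ->]]; first by rewrite eqxx.
move=> _; rewrite -[X in X <= _]mul1r ler_pM2r ?invr_gt0 ?sq_gt0 //.
by apply: exprn_ege1; rewrite ler1n.
Qed.

Lemma G0 (w : V -> R) : (forall u, w u = 0) -> G w = 0.
Proof.
move=> hw; apply: big1 => u _; apply: big1 => v _.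
by rewrite hw Estar0l.
Qed.

Lemma B_ge0 : 0 <= B.
Proof.
have := hB (x := fun _ => 0); rewrite G0 // normr0; apply.
split; first by rewrite big1 ?ler0n // => u _; rewrite expr0n.
split; first by move=> v; left.
by move=> u v; rewrite eqxx.
Qed.


Lemma nrm_ge0 (x : V -> R) : 0 <= nrm x.
Proof. by apply: sumr_ge0 => u _; rewrite sqr_ge0. Qed.

Lemma G_scale (q : R) (z : V -> R) : 0 < q -> G (fun u => q * z u) = q ^+ 2 * G z.
Proof.
move=> hq; rewrite /restr_form mulr_sumr; apply: eq_bigr => u _.
rewrite mulr_sumr; apply: eq_bigr => v _; rewrite Estar_scale //.
case: ifP => _; last by rewrite mulr0.
rewrite expr2 -!mulrA; congr (_ * _); rewrite [RHS]mulrCA; congr (_ * _); by rewrite mulrCA.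
Qed.

Lemma scale_bound (z : V -> R) : (forall u, DP (z u)) ->
  (forall u v, z v != 0 -> z u <= d%:R * z v) -> nrm z <= 10%:R ->
  `|G z| <= nrm z * B.
Proof.
move=> hD hr hs.
case: (pickP (fun v => z v != 0)) => [v0 hv0|hz]; last first.
  rewrite G0 ?normr0 ?mulr_ge0 ?nrm_ge0 ?B_ge0 // => u.
  by have := hz u => /= /negbFE /eqP.
have hc := DP_ge (hD v0) hv0.
have s_ge : sq^-1 ^+ 2 <= nrm z.
  rewrite /nrm (bigD1 v0) //=; apply: ler_wpDr; first by apply: sumr_ge0 => u _; rewrite sqr_ge0.
  have sq0 : 0 <= sq^-1 by rewrite invr_ge0; exact: ltW sq_gt0.
  by rewrite lerXn2r // nnegrE ?sq0 ?(DP_ge0 (hD v0)).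
have sc : sq^-1 ^+ 2 * (n * h)%:R = 1 by rewrite -[X in _ * X]sq_sq exprVn mulVf // expf_neq0 // gt_eqF // sq_gt0.
have s_gt0 : 0 < nrm z.
  by apply: lt_le_trans s_ge; rewrite exprn_gt0 // invr_gt0 sq_gt0.
have [j /andP[j1 j2]] : exists j, 4%:R ^+ j <= 10%:R / nrm z < 4%:R ^+ j.+1.
  apply: (@dlog R 4%:R _ (10 * (n * h))); first by rewrite ler_nat.
    by rewrite ler_pdivlMr // mul1r.
  rewrite ler_pdivrMr // natrM -[X in X <= _]mulr1 -mulrA ler_wpM2l ?ler0n //.
  by rewrite -[X in X <= _]sc mulrC ler_wpM2l ?ler0n.
set q := 2%:R ^+ j : R.
have q_gt0 : 0 < q by rewrite exprn_gt0 // ltr0n.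
have q2 : q ^+ 2 = 4%:R ^+ j by rewrite /q -exprM mulnC exprM -natrX.
have hZ : @inZ R h n d (fun u => q * z u).
  split.
    have -> : \sum_v (q * z v) ^+ 2 = q ^+ 2 * nrm z.
      by rewrite /nrm mulr_sumr; apply: eq_bigr => v _; rewrite exprMn.
    by rewrite q2 -ler_pdivlMr.
  split.
    move=> u; case: (hD u) => [->|[k ->]]; first by left; rewrite mulr0.
    by right; exists (j + k)%N; rewrite exprD mulrA.
  move=> u v; rewrite mulf_eq0 negb_or => /andP[_ hv].
  by rewrite mulrCA ler_wpM2l // ?(ltW q_gt0) // hr.
have := hB hZ; rewrite G_scale // normrM ger0_norm ?exprn_ge0 ?(ltW q_gt0) // q2 => hG.
have hq4 : 1 <= 4%:R ^+ j * nrm z.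
  move: j2; rewrite ltr_pdivrMr // exprS -mulrA => j2.
  rewrite -(ler_pM2l (_ : 0 < 4%:R)) ?ltr0n // mulr1.
  by apply: (le_trans _ (ltW j2)); rewrite ler_nat.
rewrite -(ler_pM2l (_ : 0 < 4%:R ^+ j)) ?exprn_gt0 ?ltr0n //.
apply: (le_trans hG); by rewrite mulrA -[X in X <= _]mul1r ler_wpM2r ?B_ge0.
Qed.


Definition rst (S : pred V) (w : V -> R) : V -> R := fun u => if S u then w u else 0.
Definition gt (w : V -> R) u v := if Estar d (w u) (w v) then w u * N u v * w v else 0.

Lemma G_rst S (w : V -> R) :
  G (rst S w) = \sum_u \sum_v (if S u && S v then gt w u v else 0).
Proof.
apply: eq_bigr => u _; apply: eq_bigr => v _; rewrite /rst /gt.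
by case: (S u); case: (S v); rewrite /= ?Estar0l ?Estar0r.
Qed.

Lemma G_full (w : V -> R) : G w = \sum_u \sum_v gt w u v.
Proof. by []. Qed.

Lemma nrm_rst S (w : V -> R) : nrm (rst S w) = \sum_u (if S u then w u ^+ 2 else 0).
Proof. by apply: eq_bigr => u _; rewrite /rst; case: (S u); rewrite ?expr0n. Qed.

Lemma nrm_rst_le S (w : V -> R) : nrm (rst S w) <= nrm w.
Proof.
rewrite nrm_rst; apply: ler_sum => u _; case: (S u) => //; exact: sqr_ge0.
Qed.

Lemma ifdiff (X Y : bool) (g : R) : (Y -> X) ->
  (if X then g else 0) - (if Y then g else 0) = if X && ~~ Y then g else 0.
Proof. case: X; case: Y => //= H0; rewrite ?subrr ?subr0 //; by have := H0 isT. Qed.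

Lemma bool_step (a b t0 t1 t2 : R) : t0 <= t1 -> t1 = th * t0 ->
  a < th * b -> b < th * a ->
  ((a < t2) && (b < t2)) && ~~ ((a < t1) && (b < t1)) =
  (((t0 <= a) && (a < t2)) && ((t0 <= b) && (b < t2))) &&
     ~~ (((t0 <= a) && (a < t1)) && ((t0 <= b) && (b < t1))).
Proof.
move=> h01 h1 hab hba; apply/idP/idP.
  case/andP => /andP[ha2 hb2]; rewrite negb_and -!leNgt => /orP[ha1|hb1].
    have h0a : t0 <= a by apply: le_trans ha1.
    have h0b : t0 <= b.
      apply: ltW; rewrite -(ltr_pM2l th0) -h1; exact: le_lt_trans hab.
    by rewrite ha2 hb2 h0a h0b /= ltNge ha1.
  have h0b : t0 <= b by apply: le_trans hb1.
  have h0a : t0 <= a.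
    apply: ltW; rewrite -(ltr_pM2l th0) -h1; exact: le_lt_trans hba.
  by rewrite ha2 hb2 h0a h0b /= [b < t1]ltNge hb1 andbF.
case/andP => /andP[/andP[h0a ha2] /andP[h0b hb2]] hnn.
by rewrite ha2 hb2 /=; move: hnn; rewrite h0a h0b.
Qed.

Section Blocks.
Variable w : V -> R.
Hypothesis hw : forall u, DP (w u).
Hypothesis hw10 : nrm w <= 10%:R.

Definition T m := sq^-1 * th ^+ m.
Definition Pk k := rst (fun u => w u < T k) w.
Definition Wk m := rst (fun u => (T m <= w u) && (w u < T m.+2)) w.
Definition Bk m := rst (fun u => (T m <= w u) && (w u < T m.+1)) w.
Definition Sk k := nrm (Pk k).

Lemma T_gt0 m : 0 < T m.
Proof. by rewrite mulr_gt0 ?invr_gt0 ?sq_gt0 // exprn_gt0 // th0. Qed.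

Lemma TS m : T m.+1 = th * T m.
Proof. by rewrite /T exprS mulrCA. Qed.

Lemma TSS m : T m.+2 = d%:R * T m.
Proof. by rewrite TS TS mulrA -expr2 thsq. Qed.

Lemma T_le m : T m <= T m.+1.
Proof.
rewrite TS -[X in X <= _]mul1r ler_wpM2r ?th1 //; exact: ltW (T_gt0 m).
Qed.

Lemma T_mono m k : (m <= k)%N -> T m <= T k.
Proof.
move=> hmk; rewrite /T ler_wpM2l ?ler_weXn2l ?th1 //.
by rewrite invr_ge0; exact: ltW sq_gt0.
Qed.

Lemma step_id m : G (Pk m.+2) - G (Pk m.+1) = G (Wk m) - G (Bk m).
Proof.
rewrite /Pk /Wk /Bk !G_rst -!sumrB; apply: eq_bigr => u _.
rewrite -!sumrB; apply: eq_bigr => v _.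
rewrite /gt; case hE : (Estar d (w u) (w v)); last by rewrite !if_same subrr.
have [hab hba] := Estar_ratio hd hE.
have i1 : forall x, x < T m.+1 -> x < T m.+2 := fun x hx => lt_le_trans hx (T_le _).
rewrite !ifdiff; first last.
- by case/andP => /i1 -> /i1 ->.
- by case/andP => /andP[-> /i1 ->] /andP[-> /i1 ->].
by rewrite (@bool_step _ _ (T m) (T m.+1)) // ?T_le // TS.
Qed.

Lemma nrm_split m k : (m <= k)%N ->
  nrm (rst (fun u => (T m <= w u) && (w u < T k)) w) = Sk k - Sk m.
Proof.
move=> hmk; rewrite /Sk /Pk !nrm_rst -sumrB; apply: eq_bigr => u _.
case: (ltP (w u) (T m)) => hm /=.
  by rewrite (lt_le_trans hm (T_mono hmk)) subrr.
by case: (w u < T k); rewrite subr0.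
Qed.

Lemma Sk_ge0 k : 0 <= Sk k.
Proof. exact: nrm_ge0. Qed.

Lemma Sk_le k : Sk k <= nrm w.
Proof. exact: nrm_rst_le. Qed.

Lemma rst_DP S u : DP (rst S w u).
Proof. by rewrite /rst; case: (S u) => //; left. Qed.

Lemma win_ratio (lo hi : R) : hi <= d%:R * lo ->
  forall u v, rst (fun x => (lo <= w x) && (w x < hi)) w v != 0 ->
  rst (fun x => (lo <= w x) && (w x < hi)) w u <=
  d%:R * rst (fun x => (lo <= w x) && (w x < hi)) w v.
Proof.
move=> hlh u v; rewrite /rst; case: ifP => [/andP[hv _] _|]; last by rewrite eqxx.
case: ifP => [/andP[_ hu]|_].
  apply: (le_trans (ltW hu)); apply: (le_trans hlh).
  by rewrite ler_wpM2l ?ler0n.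
by rewrite mulr_ge0 ?ler0n ?DP_ge0.
Qed.


Lemma ac1 (a b c : R) : (b + c + c) + (a - c) + (b - c) = a + b + b.
Proof. by rewrite -[b + c + c + _]addrA [c + (a - c)]addrC subrK addrAC -[b + c + (b - c)]addrA [c + (b - c)]addrC subrK addrC addrA. Qed.

Lemma P1_ratio u v : Pk 1 v != 0 -> Pk 1 u <= d%:R * Pk 1 v.
Proof.
rewrite /Pk /rst; case: ifP => [hv1 hv0|]; last by rewrite eqxx.
have hv : sq^-1 <= w v by apply: DP_ge.
case: ifP => [hu1|_]; last by rewrite mulr_ge0 ?ler0n ?DP_ge0.
apply: (le_trans (ltW hu1)); rewrite TS.
apply: (@le_trans _ _ (d%:R * T 0)); first by rewrite ler_wpM2r ?thd // ltW // T_gt0.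
by rewrite ler_wpM2l ?ler0n // /T expr0 mulr1.
Qed.

Lemma blk_inv k : `|G (Pk k.+1)| <= (Sk k.+1 + Sk k + Sk k) * B.
Proof.
elim: k => [|k IH].
  have h1 := scale_bound (z := Pk 1) (fun u => rst_DP _ u) P1_ratio (le_trans (Sk_le 1) hw10).
  apply: (le_trans h1).
  by rewrite ler_wpM2r ?B_ge0 // -addrA lerDl addr_ge0 ?Sk_ge0.
have E : G (Pk k.+2) = G (Pk k.+1) + (G (Wk k) - G (Bk k)).
  by rewrite -step_id addrC subrK.
rewrite E; apply: (le_trans (ler_normD _ _)).
apply: (le_trans (lerD IH (ler_normB _ _))).
have hW : `|G (Wk k)| <= (Sk k.+2 - Sk k) * B.
  rewrite /Wk -nrm_split; last by rewrite -addn2 leq_addr.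
  apply: scale_bound.
  - by move=> u; apply: rst_DP.
  - by apply: win_ratio; rewrite TSS.
  - exact: le_trans (nrm_rst_le _ _) hw10.
have hBl : `|G (Bk k)| <= (Sk k.+1 - Sk k) * B.
  rewrite /Bk -nrm_split; last exact: leqnSn.
  apply: scale_bound.
  - by move=> u; apply: rst_DP.
  - by apply: win_ratio; rewrite TS ler_wpM2r ?thd // ltW // T_gt0.
  - exact: le_trans (nrm_rst_le _ _) hw10.
apply: (le_trans (lerD (lexx _) (lerD hW hBl))).
by rewrite -!mulrDl addrA ac1.
Qed.

Lemma exK : exists K, forall u, w u < T K.
Proof.
have : forall u, exists K, w u < T K.
  move=> u; case: (hw u) => [->|[k ->]]; first by exists 0%N; apply: T_gt0.
  exists (2 * k.+1)%N; rewrite /T exprM thsq [_ / sq]mulrC ltr_pM2l ?invr_gt0 ?sq_gt0 //.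
  apply: (@lt_le_trans _ _ (2%:R ^+ k.+1)).
    by rewrite exprS -[X in X < _]mul1r ltr_pM2r ?exprn_gt0 ?ltr0n // ltr1n.
  by rewrite lerXn2r ?nnegrE ?ler0n // ler_nat.
case/fin_all_exists => f hf; exists (\max_u f u) => u.
exact: lt_le_trans (hf u) (T_mono (leq_bigmax u)).
Qed.

Lemma block_bound : `|G w| <= (nrm w + nrm w + nrm w) * B.
Proof.
have [K hK] := exK.
have Ew : Pk K.+1 = w.
  apply: functional_extensionality => u; rewrite /Pk /rst.
  by rewrite (lt_le_trans (hK u) (T_le K)).
have -> : G w = G (Pk K.+1) by rewrite Ew.
apply: (le_trans (blk_inv K)); rewrite ler_wpM2r ?B_ge0 //.
by rewrite !lerD ?Sk_le.
Qed.
End Blocks.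

Lemma sc : sq^-1 ^+ 2 * (n * h)%:R = 1.
Proof. by rewrite -[X in _ * X]sq_sq exprVn mulVf // expf_neq0 // gt_eqF // sq_gt0. Qed.

Lemma sq_ge1 : 1 <= sq.
Proof.
rewrite -[X in X <= _]sqrtr1 ler_sqrt ?ltr01 // ler1n muln_gt0 hn //.
Qed.

Lemma DP_inv : DP sq^-1.
Proof. by right; exists 0%N; rewrite expr0 mul1r. Qed.

Lemma interval_pos t : 0 <= t -> t <= 1 -> exists a b : R,
  [/\ a <= t <= b, DP a, DP b, a ^+ 2 <= 4%:R * t ^+ 2 + sq^-1 ^+ 2 &
      b ^+ 2 <= 4%:R * t ^+ 2 + sq^-1 ^+ 2].
Proof.
move=> t0 t1; have q0 : 0 < sq^-1 by rewrite invr_gt0 sq_gt0.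
have hc : 0 <= 4%:R * t ^+ 2 by rewrite mulr_ge0 ?ler0n ?sqr_ge0.
case: (lerP t sq^-1) => ht.
  exists 0, sq^-1; split => //.
  - by rewrite t0 ht.
  - by left.
  - exact: DP_inv.
  - by rewrite expr0n /= addr_ge0 ?sqr_ge0.
  - by rewrite lerDr.
have [k /andP[k1 k2]] : exists k, 2%:R ^+ k <= t * sq < 2%:R ^+ k.+1.
  apply: (@dlog R 2%:R (lexx _) (n * h)).
    have sq0 : sq != 0 by rewrite gt_eqF // sq_gt0.
    rewrite -[X in X <= _](mulVf sq0) ler_pM2r ?sq_gt0 //; exact: ltW.
  rewrite -[X in _ <= X]sq_sq expr2; apply: ler_wpM2r; first exact: ltW sq_gt0.
  by apply: le_trans t1 sq_ge1.
have s0 := sq_gt0.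
exists (2%:R ^+ k / sq), (2%:R ^+ k.+1 / sq).
have ha : 2%:R ^+ k / sq <= t by rewrite ler_pdivrMr.
have ha0 : 0 <= 2%:R ^+ k / sq by rewrite divr_ge0 ?exprn_ge0 ?ler0n // ltW.
have hb : 2%:R ^+ k.+1 / sq = 2%:R * (2%:R ^+ k / sq) by rewrite exprS mulrA.
have hsq : (2%:R ^+ k / sq) ^+ 2 <= t ^+ 2 by rewrite lerXn2r ?nnegrE.
split.
- by rewrite ha /= ler_pdivlMr // ltW.
- by right; exists k.
- by right; exists k.+1.
- apply: (le_trans hsq); apply: ler_wpDr; first by rewrite sqr_ge0.
  by rewrite -[X in X <= _]mul1r ler_wpM2r ?sqr_ge0 ?ler1n.
- rewrite hb exprMn; apply: ler_wpDr; first by rewrite sqr_ge0.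
  have -> : (2%:R : R) ^+ 2 = 4%:R by rewrite -natrX.
  by rewrite ler_wpM2l ?ler0n.
Qed.

Lemma interval t : `|t| <= 1 -> exists a b : R,
  [/\ a <= t <= b, DP `|a|, DP `|b|, a ^+ 2 <= 4%:R * t ^+ 2 + sq^-1 ^+ 2 &
      b ^+ 2 <= 4%:R * t ^+ 2 + sq^-1 ^+ 2].
Proof.
case: (lerP 0 t) => ht.
  rewrite ger0_norm // => t1; have [a [b [hab ha hb h1 h2]]] := interval_pos ht t1.
  by exists a, b; rewrite !ger0_norm ?DP_ge0.
rewrite ltr0_norm // => t1.
have t0 : 0 <= - t by rewrite oppr_ge0 ltW.
have [a [b [/andP[h1 h2] ha hb s1 s2]]] := interval_pos t0 t1.
exists (- b), (- a); rewrite !normrN !ger0_norm ?DP_ge0 // !sqrrN -(sqrrN t).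
split => //; by rewrite lerNl h2 lerNr h1.
Qed.

Lemma nsq (x : R) : `|x| ^+ 2 = x ^+ 2.
Proof. exact: real_normK (num_real x). Qed.

Definition Mp (u v : V) := @adjM R h n e u v + @adjMbar R h n H u v.

Lemma M_ge0 u v : 0 <= @adjM R h n e u v.
Proof. by rewrite /adjM; case: (e u v); rewrite ?ler01. Qed.

Lemma Mb_ge0 u v : 0 <= @adjMbar R h n H u v.
Proof. by rewrite /adjMbar; case: (H _ _); rewrite ?invr_ge0 ?ler0n. Qed.

Lemma Mp_ge0 u v : 0 <= Mp u v.
Proof. by rewrite addr_ge0 ?M_ge0 ?Mb_ge0. Qed.

Lemma Mp_row u : \sum_v Mp u v = d%:R + d%:R.
Proof. by rewrite big_split /= (M_row R hreg hL) (Mb_row R hreg hn). Qed.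

Lemma Mp_sym u v : Mp u v = Mp v u.
Proof. by rewrite /Mp (M_sym R hL) (Mb_sym R hS). Qed.

Lemma N_le u v : `|N u v| <= Mp u v.
Proof.
rewrite /matN; apply: (le_trans (ler_normB _ _)).
by rewrite !ger0_norm ?M_ge0 ?Mb_ge0.
Qed.

Definition QnE (y : V -> R) :=
  \sum_u \sum_v (if Estar d `|y u| `|y v| then 0 else y u * N u v * y v).
Definition QE (y : V -> R) :=
  \sum_u \sum_v (if Estar d `|y u| `|y v| then y u * N u v * y v else 0).

Lemma qf_split (y : V -> R) : qf N y = QE y + QnE y.
Proof.
rewrite /qf /QE /QnE -big_split; apply: eq_bigr => u _.
rewrite -big_split; apply: eq_bigr => v _.
case: (Estar d _ _).
  exact: (esym (addr0 _)).
exact: (esym (add0r _)).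
Qed.

Lemma QnE_bound (y : V -> R) :
  th * `|QnE y| <= (d%:R + d%:R) * nrm y + (d%:R + d%:R) * nrm y.
Proof.
have step : forall u v, th * `|if Estar d `|y u| `|y v| then 0 else y u * N u v * y v|
    <= Mp u v * y u ^+ 2 + Mp u v * y v ^+ 2.
  move=> u v; case: ifPn => hE.
    by rewrite normr0 mulr0 addr_ge0 // mulr_ge0 ?Mp_ge0 ?sqr_ge0.
  have := notEstar hd (normr_ge0 (y u)) (normr_ge0 (y v)) hE; rewrite !nsq => h1.
  rewrite -mulrDr !normrM [`|y u| * _]mulrC -mulrA mulrCA.
  apply: (@le_trans _ _ (`|N u v| * (y u ^+ 2 + y v ^+ 2))).
    by rewrite ler_wpM2l.
  by rewrite ler_wpM2r ?addr_ge0 ?sqr_ge0 ?N_le.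
apply: (@le_trans _ _ (\sum_u \sum_v (Mp u v * y u ^+ 2 + Mp u v * y v ^+ 2))).
  apply: (le_trans (ler_wpM2l (ltW th0) (ler_norm_sum _ _ _))).
  rewrite mulr_sumr; apply: ler_sum => u _.
  apply: (le_trans (ler_wpM2l (ltW th0) (ler_norm_sum _ _ _))).
  by rewrite mulr_sumr; apply: ler_sum => v _.
rewrite (eq_bigr (fun u => \sum_v Mp u v * y u ^+ 2 + \sum_v Mp u v * y v ^+ 2));
  last by move=> u _; rewrite big_split.
rewrite big_split /=; apply: lerD.
  rewrite /nrm mulr_sumr; apply: ler_sum => u _.
  by rewrite -mulr_suml Mp_row mulrC.
rewrite exchange_big /= /nrm mulr_sumr; apply: ler_sum => v _.
rewrite -mulr_suml (eq_bigr (fun u => Mp v u)); last by move=> u _; exact: Mp_sym.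
by rewrite Mp_row mulrC.
Qed.

Section Signed.
Variable y : V -> R.
Definition ya := fun u => `|y u|.
Definition yp := rst (fun u => 0 < y u) ya.
Definition ym := rst (fun u => y u < 0) ya.

Lemma QE_id : QE y = G yp + G yp + G ym + G ym - G ya.
Proof.
rewrite /yp /ym !G_rst G_full -!big_split -sumrB; apply: eq_bigr => u _ /=.
rewrite -!big_split -sumrB; apply: eq_bigr => v _ /=.
rewrite /gt /ya; case: ifPn => hE; last by rewrite !if_same !addr0 subr0.
have [hu hv] := Estar_pos hE.
case: (ltgtP (y u) 0) => su; last by move: hu; rewrite su normr0 ltxx.
- case: (ltgtP (y v) 0) => sv; last by move: hv; rewrite sv normr0 ltxx.
  + rewrite /= ?addr0 ?add0r (ltr0_norm su) (ltr0_norm sv).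
    by rewrite addrK mulrN !mulNr opprK.
  + rewrite /= ?addr0 ?add0r (ltr0_norm su) (gtr0_norm sv).
    by rewrite !mulNr opprK.
- case: (ltgtP (y v) 0) => sv; last by move: hv; rewrite sv normr0 ltxx.
  + rewrite /= ?addr0 ?add0r (gtr0_norm su) (ltr0_norm sv).
    by rewrite mulrN opprK.
  + rewrite /= ?addr0 ?add0r (gtr0_norm su) (gtr0_norm sv).
    by rewrite addrK.
Qed.

Lemma signed_bound : (forall u, DP `|y u|) -> nrm y <= 5%:R ->
  `|qf N y| <= 75%:R * B + 20%:R * th.
Proof.
move=> hD hy5.
have nya : nrm ya = nrm y by apply: eq_bigr => u _; rewrite /ya nsq.
have hy10 : nrm y <= 10%:R by apply: (le_trans hy5); rewrite ler_nat.
have nya10 : nrm ya <= 10%:R by rewrite nya.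
have K15 : (nrm y + nrm y + nrm y) * B <= 15%:R * B.
  rewrite ler_wpM2r ?B_ge0 //.
  have -> : 15%:R = 5%:R + 5%:R + 5%:R :> R by rewrite -!natrD.
  by rewrite !lerD.
have Kb : forall S, `|G (rst S ya)| <= 15%:R * B.
  move=> S; apply: (le_trans _ K15).
  have h1 := block_bound (w := rst S ya) (rst_DP hD S) (le_trans (nrm_rst_le _ _) nya10).
  apply: (le_trans h1); rewrite ler_wpM2r ?B_ge0 //.
  by rewrite -nya !lerD ?nrm_rst_le.
have Ka : `|G ya| <= 15%:R * B.
  apply: (le_trans _ K15); rewrite -nya; exact: (block_bound hD nya10).
have hQE : `|QE y| <= 75%:R * B.
  rewrite QE_id; apply: (le_trans (ler_normB _ _)).
  have -> : 75%:R * B = 15%:R * B + 15%:R * B + 15%:R * B + 15%:R * B + 15%:R * B.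
    by rewrite -!mulrDl -!natrD.
  have Kp : `|G yp| <= 15%:R * B := Kb _.
  have Km : `|G ym| <= 15%:R * B := Kb _.
  apply: lerD; last exact: Ka.
  apply: (le_trans (ler_normD _ _)); apply: lerD; last exact: Km.
  apply: (le_trans (ler_normD _ _)); apply: lerD; last exact: Km.
  by apply: (le_trans (ler_normD _ _)); apply: lerD.
have hQnE : `|QnE y| <= 20%:R * th.
  rewrite -(ler_pM2l th0); apply: (le_trans (QnE_bound y)).
  have hd5 : (d%:R + d%:R) * nrm y <= (d%:R + d%:R) * 5%:R.
    by rewrite ler_wpM2l // addr_ge0 ?ler0n.
  apply: (le_trans (lerD hd5 hd5)).
  rewrite mulrCA -expr2 thsq -!natrD -!natrM -natrD ler_nat.
  rewrite -!plusE -!multE; apply/ssrnat.leP; lia.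
rewrite qf_split; apply: (le_trans (ler_normD _ _)); exact: lerD.
Qed.

End Signed.

End Main.

Lemma qfN (R : rcfType) (V : finType) (A : V -> V -> R) (z : V -> R) :
  qf (fun u v => - A u v) z = - qf A z.
Proof.
rewrite /qf -sumrN; apply: eq_bigr => u _; rewrite -sumrN; apply: eq_bigr => v _.
by rewrite mulrN mulNr.
Qed.

Theorem proposition3p3 (R : rcfType) (d h n : nat) (H : rel 'I_h)
    (e : rel (lvert h n)) :
  (2 <= d)%N -> simple_graph H -> regular d H -> is_lift H e ->
  forall B : R,
    (forall x : lvert h n -> R, @inZ R h n d x ->
       `|@restr_form R h n (@matN R h n H e) (@Estar R d) x x| <= B) ->
  forall lambda : R, @new_eigenvalue R h n e lambda ->
    `|lambda| <= 96%:R * B + 480%:R * Num.sqrt (d%:R : R).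
Proof.
move=> hd hS hreg hL B hB lambda [x [[v0 hv0] [hx heig]]].
have hh : (0 < h)%N := leq_ltn_trans (leq0n _) (ltn_ord v0.1).
have hn : (0 < n)%N := leq_ltn_trans (leq0n _) (ltn_ord v0.2).
set s := nrm x.
have s_gt0 : 0 < s.
  rewrite /s /nrm (bigD1 v0) //=; apply: ltr_wpDr.
    by apply: sumr_ge0 => u _; rewrite sqr_ge0.
  by rewrite exprn_even_gt0.
set r := Num.sqrt s.
have r_gt0 : 0 < r by rewrite sqrtr_gt0.
have r0 : r != 0 by rewrite gt_eqF.
set x' := fun u => x u / r.
have nx' : nrm x' = 1.
  rewrite /nrm (eq_bigr (fun u => x u ^+ 2 / r ^+ 2)); last first.
    by move=> u _; rewrite /x' expr_div_n.
  by rewrite -mulr_suml sqr_sqrtr ?ltW // mulfV // gt_eqF.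
have hx' : fibre_sum_zero x'.
  by move=> i; rewrite /x' -mulr_suml hx mul0r.
have heig' : forall u, \sum_v adjM R e u v * x' v = lambda * x' u.
  move=> u; rewrite /x' (eq_bigr (fun v => adjM R e u v * x v / r)).
    by rewrite -mulr_suml heig mulrA.
  by move=> v _; rewrite mulrA.
have qx : qf (matN R H e) x' = lambda by rewrite (eig_qf H hx' heig') nx' mulr1.
have x1 : forall u, `|x' u| <= 1.
  move=> u; rewrite -(ler_pXn2r (isT : (0 < 2)%N)) ?nnegrE ?normr_ge0 ?ler01 // expr1n nsq -nx'.
  rewrite /nrm (bigD1 u) //= lerDl; apply: sumr_ge0 => v _; exact: sqr_ge0.
have : forall u, exists p : R * R,
  [/\ p.1 <= x' u <= p.2, Dplus n h `|p.1|, Dplus n h `|p.2|,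
      p.1 ^+ 2 <= 4%:R * x' u ^+ 2 + (Num.sqrt ((n * h)%:R : R))^-1 ^+ 2 &
      p.2 ^+ 2 <= 4%:R * x' u ^+ 2 + (Num.sqrt ((n * h)%:R : R))^-1 ^+ 2].
  move=> u; have [a [b hab]] := interval hn hh (x1 u); by exists (a, b).
case/fin_all_exists => f hf.
have hab : forall u, (f u).1 <= x' u <= (f u).2 by move=> u; case: (hf u).
have key : forall y : lvert h n -> R, (forall u, y u = (f u).1 \/ y u = (f u).2) ->
    `|qf (matN R H e) y| <= 75%:R * B + 20%:R * Num.sqrt (d%:R : R).
  move=> y hy; apply: (signed_bound hd hS hreg hL hn hh hB).
    by move=> u; case: (hf u) => _ h1 h2 _ _; case: (hy u) => ->.
  have hyb : forall u, y u ^+ 2 <= 4%:R * x' u ^+ 2 + (Num.sqrt ((n * h)%:R : R))^-1 ^+ 2.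
    by move=> u; case: (hf u) => _ _ _ h1 h2; case: (hy u) => ->.
  apply: (le_trans (ler_sum _ (fun u _ => hyb u))).
  rewrite big_split /= -mulr_sumr -/(nrm x') nx' mulr1 sumr_const card_prod !card_ord.
  by rewrite -[_ *+ (h * n)]mulr_natr [(h * n)%N]mulnC (sc R hn hh) natr1.
have Bg : 0 <= B.
  exact: (B_ge0 hB).
have fin : 75%:R * B + 20%:R * Num.sqrt (d%:R : R) <= 96%:R * B + 480%:R * Num.sqrt (d%:R : R).
  apply: lerD; first by rewrite ler_wpM2r // ler_nat.
  by rewrite ler_wpM2r ?sqrtr_ge0 // ler_nat.
apply: le_trans fin.
case: (lerP 0 lambda) => hl.
  have [y [hy hq]] := derand (N_diag R hS hL) hab.
  rewrite ger0_norm //; apply: le_trans (key y hy); rewrite -qx.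
  exact: le_trans hq (ler_norm _).
have hA : forall u, (fun u v => - matN R H e u v) u u = 0.
  by move=> u /=; rewrite N_diag ?oppr0.
have [y [hy hq]] := @derand R _ (fun u v => - matN R H e u v) hA x' _ _ hab.
rewrite ltr0_norm //; apply: le_trans (key y hy); rewrite -qx.
move: hq; rewrite !qfN lerN2 => hq.
apply: (@le_trans _ _ (- qf (matN R H e) y)); first by rewrite lerN2.
by rewrite -normrN ler_norm.
Qed.
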